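(* Let $\mathcal{X},\mathcal{Y}$ be finite, $P_X$ a distribution on $\mathcal{X}$, $P_{Y|X}$ a channel, $P_{XY}=P_XP_{Y|X}$ with $\mathcal{Y}$-marginal $P_Y$, and let $R>I(P_X,P_{Y|X})$. Then \[ \min_{Q_{XY}}\Big\{D(Q_{XY}\|P_{XY})+\tfrac12\big[R-D(Q_{XY}\|P_XQ_Y)\big]_+\Big\}=\max_{\lambda\in[1,2]}\Big\{\frac{\lambda-1}{\lambda}\big(R-I^{\mathsf{s}}_\lambda(P_X,P_{Y|X})\big)\Big\}, \] where the minimum is over all joint distributions $Q_{XY}$ on $\mathcal{X}\times\mathcal{Y}$, $Q_Y$ is the $\mathcal{Y}$-marginal of $Q_{XY}$, and $[f]_+=\max\{0,f\}$.
   Context: $D$ is relative entropy and $I(P_X,P_{Y|X})=D(P_{XY}\|P_XP_Y)$. Sibson's $\alpha$-mutual information is $I^{\mathsf{s}}_\lambda(P_X,P_{Y|X})=\frac{\lambda}{\lambda-1}\log\sum_{y}\big(\sum_xP_X(x)P_{Y|X}^\lambda(y|x)\big)^{1/\lambda}$ for $\lambda\neq1$, with $I^{\mathsf{s}}_1=I(P_X,P_{Y|X})$. Logarithms and exponentials use a common arbitrary base. *)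

(* Defs.v *)
From mathcomp Require Import all_boot all_order all_algebra.
From mathcomp Require Import all_classical all_reals all_analysis.
Set Implicit Arguments. Unset Strict Implicit. Unset Printing Implicit Defensive.
Import Order.TTheory GRing.Theory Num.Theory.
Local Open Scope ring_scope.

Section InfoDefs.
Variable R : realType.

Definition is_dist (T : finType) (p : T -> R) : Prop :=
  (forall t, 0 <= p t) /\ \sum_(t : T) p t = 1.

Definition logb (b x : R) : R := ln x / ln b.

Definition relent (b : R) (T : finType) (q p : T -> R) : \bar R :=
  if [exists t, (q t != 0) && (p t == 0)] then +oo%E
  else (\sum_(t : T) (if q t == 0 then 0 else q t * logb b (q t / p t)))%:E.

Definition joint (X Y : finType) (PX : X -> R) (W : X -> Y -> R) : X * Y -> R :=
  fun xy => PX xy.1 * W xy.1 xy.2.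

Definition margY (X Y : finType) (Q : X * Y -> R) : Y -> R :=
  fun y => \sum_(x : X) Q (x, y).

Definition prodD (X Y : finType) (PX : X -> R) (QY : Y -> R) : X * Y -> R :=
  fun xy => PX xy.1 * QY xy.2.

Definition MI (b : R) (X Y : finType) (PX : X -> R) (W : X -> Y -> R) : \bar R :=
  relent b (joint PX W) (prodD PX (margY (joint PX W))).

Definition sibsonMI (b : R) (X Y : finType) (PX : X -> R) (W : X -> Y -> R)
    (l : R) : \bar R :=
  if l == 1 then MI b PX W
  else ((l / (l - 1)) *
        logb b (\sum_(y : Y) (\sum_(x : X) PX x * (W x y `^ l)) `^ (l^-1)))%:E.

Definition objective (b : R) (X Y : finType) (PX : X -> R) (W : X -> Y -> R)
    (Rt : R) (Q : X * Y -> R) : \bar R :=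
  (relent b Q (joint PX W) +
   (2^-1)%:E * maxe 0%E (Rt%:E - relent b Q (prodD PX (margY Q))))%E.

Definition dual_fun (b : R) (X Y : finType) (PX : X -> R) (W : X -> Y -> R)
    (Rt : R) (l : R) : \bar R :=
  (((l - 1) / l)%:E * (Rt%:E - sibsonMI b PX W l))%E.

End InfoDefs.

(* Main.v *)
Require Import Defs.
From mathcomp Require Import all_boot all_order all_algebra.
From mathcomp Require Import all_classical all_reals all_analysis.
From mathcomp Require Import ring lra.
Import Order.TTheory GRing.Theory Num.Theory.
Import numFieldNormedType.Exports.
Set Implicit Arguments. Unset Strict Implicit. Unset Printing Implicit Defensive.
Local Open Scope ring_scope.
Section Gen.
Variable R : realType.

Lemma ln_le_sub1 (t : R) : 0 < t -> ln t <= t - 1.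
Proof.
move=> t0; have := @le_ln1Dx R (t - 1).
rewrite (addrC 1) subrK; apply; lra.
Qed.

Lemma sum_ge_term (T : finType) (F : T -> R) j :
  (forall i, 0 <= F i) -> F j <= \sum_i F i.
Proof.
move=> H; rewrite (bigD1 j) //= lerDl; apply: sumr_ge0 => i _; exact: H.
Qed.

Lemma lnD2 (a c : R) : 0 < a -> 0 < c -> ln (a / c) = ln a - ln c.
Proof. by move=> a0 c0; rewrite ln_div // posrE. Qed.

Lemma lnM2 (a c : R) : 0 < a -> 0 < c -> ln (a * c) = ln a + ln c.
Proof. by move=> a0 c0; rewrite lnM // posrE. Qed.

Lemma gibbs (T : finType) (q a : T -> R) :
  (forall t, 0 <= q t) -> (forall t, 0 <= a t) ->
  (forall t, q t != 0 -> 0 < a t) -> 0 < \sum_t q t ->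
  \sum_t (if q t == 0 then 0 else q t * ln (a t / q t))
    <= (\sum_t q t) * ln ((\sum_t a t) / \sum_t q t).
Proof.
move=> q0 a0 qa s0.
set s := \sum_t q t; set A := \sum_t a t.
have [t qt] : exists t, q t != 0.
  case: (pickP (fun t => q t != 0)) => [t qt|H]; first by exists t.
  move: s0; rewrite /s big1 ?ltxx // => i _; by move: (H i) => /= /negbFE /eqP.
have A0 : 0 < A by apply: (lt_le_trans (qa t qt)); exact: sum_ge_term.
set c := A / s.
have c0 : 0 < c by rewrite /c divr_gt0.
rewrite mulr_suml -subr_le0 -sumrB.
apply: (@le_trans _ _ (\sum_t (a t / c - q t))).
  apply: ler_sum => i _; case: eqP => [->|/eqP qi].
    rewrite mul0r subrr subr0; apply: divr_ge0 => //; exact: ltW.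
  have qi0 : 0 < q i by rewrite lt0r qi q0.
  have ai0 := qa i qi.
  rewrite -mulrBr -lnD2 ?divr_gt0 //.
  have H := @ln_le_sub1 _ (divr_gt0 (divr_gt0 ai0 qi0) c0).
  apply: (le_trans (ler_wpM2l (ltW qi0) H)).
  rewrite le_eqVlt; apply/orP; left; apply/eqP; field.
  by apply/andP; split; [rewrite gt_eqF | rewrite gt_eqF].
rewrite sumrB -mulr_suml /c -/A.
rewrite -/s le_eqVlt; apply/orP; left; apply/eqP; field.
by apply/andP; split; rewrite gt_eqF.
Qed.

Definition pw (a e : R) := if a == 0 then 0 else expR (e * ln a).

Lemma pwE a e : e != 0 -> a `^ e = pw a e.
Proof. by move=> e0; rewrite /powR /pw; case: eqP => //; rewrite (negbTE e0). Qed.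

Lemma pw_ge0 a e : 0 <= pw a e.
Proof. rewrite /pw; case: eqP => // _; exact: ltW (expR_gt0 _). Qed.

Lemma pw_gt0 a e : 0 < a -> 0 < pw a e.
Proof. by move=> a0; rewrite /pw gt_eqF // expR_gt0. Qed.

Lemma pw0e e : pw 0 e = 0.
Proof. by rewrite /pw eqxx. Qed.

Lemma pw1 a : 0 <= a -> pw a 1 = a.
Proof.
rewrite /pw; case: eqP => [->//|/eqP a0 ag0]; rewrite mul1r lnK // posrE lt0r a0 ag0 //.
Qed.

Lemma pw0 a : a != 0 -> pw a 0 = 1.
Proof. by rewrite /pw => /negbTE ->; rewrite mul0r expR0. Qed.

Lemma pwD a e f : pw a (e + f) = pw a e * pw a f.
Proof. by rewrite /pw; case: eqP => _; rewrite ?mul0r // mulrDl expRD. Qed.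

Lemma ln_pw a e : 0 < a -> ln (pw a e) = e * ln a.
Proof. by move=> a0; rewrite /pw gt_eqF // expRK. Qed.

Lemma pw_eq0 a e : 0 <= a -> (pw a e == 0) = (a == 0).
Proof.
move=> a0; case: (eqVneq a 0) => [->|an]; first by rewrite pw0e eqxx.
by rewrite gt_eqF // pw_gt0 // lt0r an.
Qed.

Lemma mul_pw a e : 0 <= a -> a * pw a (e - 1) = pw a e.
Proof.
move=> a0; rewrite -{1}(pw1 a0) -pwD; congr pw; ring.
Qed.

Lemma cM (f g : R -> R) (x : R) : {for x, continuous f} -> {for x, continuous g} ->
  {for x, continuous (fun t => f t * g t)}.
Proof. move=> a b; exact: continuousM a b. Qed.
Lemma cD (f g : R -> R) (x:R) : {for x, continuous f} -> {for x, continuous g} ->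
  {for x, continuous (fun t => f t + g t)}.
Proof. move=> a b; exact: continuousD a b. Qed.
Lemma cB (f g : R -> R) (x:R) : {for x, continuous f} -> {for x, continuous g} ->
  {for x, continuous (fun t => f t - g t)}.
Proof. move=> a b; exact: continuousB a b. Qed.
Lemma cS (I : finType) (f : I -> R -> R) (x:R) : (forall i, {for x, continuous (f i)}) ->
  {for x, continuous (fun t => \sum_i f i t)}.
Proof. move=> H. apply: cvg_big => //. exact: add_continuous. move=> i _; exact: H. Qed.
Lemma cI (x:R) : {for x, continuous (fun t : R => t)}.
Proof. exact: cvg_id. Qed.
Lemma cC (x c:R) : {for x, continuous (fun t : R => c)}.
Proof. exact: cst_continuous. Qed.
Lemma cE (x:R) (f : R -> R) : {for x, continuous f} -> {for x, continuous (fun t : R => expR (f t))}.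
Proof. move=> H; apply: (continuous_comp H); exact: continuous_expR. Qed.
Lemma cL (x:R) (f : R -> R) : 0 < f x -> {for x, continuous f} -> {for x, continuous (fun t : R => ln (f t))}.
Proof. move=> f0 H; apply: (continuous_comp H); exact: continuous_ln. Qed.
Lemma cV (x:R) (f : R -> R) : f x != 0 -> {for x, continuous f} -> {for x, continuous (fun t : R => (f t)^-1)}.
Proof. move=> f0 H; exact: continuousV. Qed.

Lemma c_pw (a : R) (e : R -> R) (x : R) : {for x, continuous e} ->
  {for x, continuous (fun t => pw a (e t))}.
Proof.
move=> H; rewrite /pw; case: eqP => _; first exact: cC.
by apply: cE; apply: cM => //; exact: cC.
Qed.

Definition kl (T : finType) (q p : T -> R) :=
  \sum_t (if q t == 0 then 0 else q t * ln (q t / p t)).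

Lemma relent_kl (b : R) (T : finType) (q p : T -> R) :
  (forall t, q t != 0 -> p t != 0) -> relent b q p = (kl q p / ln b)%:E.
Proof.
move=> H; rewrite /relent; case: existsP => [[t /andP[qt /eqP pt]]|_].
  by move: (H t qt); rewrite pt eqxx.
congr EFin; rewrite /kl /logb mulr_suml; apply: eq_bigr => t _.
by case: ifP => _; rewrite ?mul0r // mulrA.
Qed.

Lemma relent_oo (b : R) (T : finType) (q p : T -> R) t :
  q t != 0 -> p t = 0 -> relent b q p = +oo%E.
Proof.
move=> qt pt; rewrite /relent; case: existsP => // -[]; exists t.
by rewrite qt pt eqxx.
Qed.

End Gen.

Section Chan.
Variable R : realType.
Variables (X Y : finType) (PX : X -> R) (W : X -> Y -> R).
Hypothesis PX0 : forall x, 0 <= PX x.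
Hypothesis PX1 : \sum_x PX x = 1.
Hypothesis W0 : forall x y, 0 <= W x y.
Hypothesis W1 : forall x, \sum_y W x y = 1.

Lemma sum_pair (F : X * Y -> R) : \sum_t F t = \sum_y \sum_x F (x, y).
Proof. by rewrite exchange_big pair_bigA /=; apply: eq_bigr => -[x y]. Qed.

Lemma P_ge0 t : 0 <= joint PX W t.
Proof. by rewrite /joint mulr_ge0. Qed.

Lemma P_sum : \sum_t joint PX W t = 1.
Proof.
rewrite sum_pair exchange_big -PX1; apply: eq_bigr => x _.
by rewrite /joint /= -mulr_sumr W1 mulr1.
Qed.

Definition A l y := \sum_x PX x * pw (W x y) l.
Definition pos y := [exists x, (PX x != 0) && (W x y != 0)].

Lemma A_ge0 l y : 0 <= A l y.
Proof. by apply: sumr_ge0 => x _; rewrite mulr_ge0 // pw_ge0. Qed.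

Lemma A_gt0 l y : pos y -> 0 < A l y.
Proof.
move=> /existsP[x /andP[px wx]].
apply: (@lt_le_trans _ _ (PX x * pw (W x y) l)).
  have px' : 0 < PX x by rewrite lt0r px PX0.
  have wx' : 0 < W x y by rewrite lt0r wx W0.
  by rewrite mulr_gt0 ?pw_gt0.
by apply: (sum_ge_term (F := fun x => PX x * pw (W x y) l)) => i; rewrite mulr_ge0 // pw_ge0.
Qed.

Lemma A_eq0 l y : ~~ pos y -> A l y = 0.
Proof.
move=> H; apply: big1 => x _.
case: (eqVneq (PX x) 0) => [->|px]; first by rewrite mul0r.
have -> : W x y = 0.
  by apply/eqP; apply: contraNT H => wn; apply/existsP; exists x; rewrite px wn.
by rewrite pw0e mulr0.
Qed.

Lemma pos_ex : exists y, pos y.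
Proof.
have [x px] : exists x, PX x != 0.
  case: (pickP (fun x => PX x != 0)) => [x qt|H]; first by exists x.
  move: PX1; rewrite big1 => [/eqP|i _]; first by rewrite eq_sym oner_eq0.
  by move: (H i) => /= /negbFE /eqP.
have [y wy] : exists y, W x y != 0.
  case: (pickP (fun y => W x y != 0)) => [y qt|H]; first by exists y.
  move: (W1 x); rewrite big1 => [/eqP|i _]; first by rewrite eq_sym oner_eq0.
  by move: (H i) => /= /negbFE /eqP.
by exists y; apply/existsP; exists x; rewrite px wy.
Qed.

Definition Z l := \sum_y pw (A l y) l^-1.

Lemma Z_gt0 l : 0 < Z l.
Proof.
have [y py] := pos_ex.
apply: (lt_le_trans (pw_gt0 l^-1 (A_gt0 l py))).
by apply: (sum_ge_term (F := fun y => pw (A l y) l^-1)) => i; exact: pw_ge0.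
Qed.

Definition Ql l (t : X * Y) :=
  PX t.1 * pw (W t.1 t.2) l * pw (A l t.2) (l^-1 - 1) / Z l.

Lemma Ql_ge0 l t : 0 <= Ql l t.
Proof.
by rewrite /Ql !mulr_ge0 ?pw_ge0 // invr_ge0 ltW // Z_gt0.
Qed.

Lemma margQl l : margY (Ql l) = fun y => pw (A l y) l^-1 / Z l.
Proof.
apply: funext => y; rewrite /margY /Ql /= -!mulr_suml.
have -> : \sum_x PX x * pw (W x y) l = A l y by [].
by rewrite mul_pw // A_ge0.
Qed.

Lemma Ql_dist l : is_dist (Ql l).
Proof.
split; first exact: Ql_ge0.
rewrite sum_pair.
have -> : \sum_y \sum_x Ql l (x, y) = \sum_y margY (Ql l) y by [].
rewrite margQl /= -mulr_suml.
have -> : \sum_y pw (A l y) l^-1 = Z l by [].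
by rewrite divff // gt_eqF // Z_gt0.
Qed.

Lemma Ql_supp l t : Ql l t != 0 -> [/\ 0 < PX t.1, 0 < W t.1 t.2 & 0 < A l t.2].
Proof.
case: t => x y /=; rewrite /Ql /= => H.
have px : PX x != 0 by apply: contraNneq H => ->; rewrite !mul0r.
have wx : W x y != 0 by apply: contraNneq H => ->; rewrite pw0e mulr0 !mul0r.
split; [by rewrite lt0r px PX0 | by rewrite lt0r wx W0|].
by apply: A_gt0; apply/existsP; exists x; rewrite px wx.
Qed.

Definition h l := \sum_t Ql l t * (l * ln (W t.1 t.2) - ln (A l t.2)).

Lemma kl2_Ql l : kl (Ql l) (prodD PX (margY (Ql l))) = h l.
Proof.
rewrite /kl /h margQl; apply: eq_bigr => -[x y] _ /=.
case: eqP => [->|/eqP qn]; first by rewrite mul0r.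
have [/= px wx ax] := Ql_supp qn.
congr (_ * _); rewrite /prodD /Ql /=.
have z0 := Z_gt0 l.
have e : pw (A l y) (l^-1 - 1) = pw (A l y) l^-1 / A l y.
  rewrite -[in RHS](mul_pw _ (ltW ax)); by field; rewrite gt_eqF.
rewrite e.
have -> : PX x * pw (W x y) l * (pw (A l y) l^-1 / A l y) / Z l /
    (PX x * (pw (A l y) l^-1 / Z l)) = pw (W x y) l / A l y.
  field; rewrite !gt_eqF ?pw_gt0 //.
by rewrite lnD2 ?pw_gt0 // ln_pw.
Qed.

Lemma kl1_Ql l : l != 0 -> kl (Ql l) (joint PX W) = (1 - l^-1) * h l - ln (Z l).
Proof.
move=> l0.
have -> : ln (Z l) = \sum_t Ql l t * ln (Z l).
  by rewrite -mulr_suml (Ql_dist l).2 mul1r.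
rewrite /kl /h mulr_sumr -sumrB; apply: eq_bigr => -[x y] _ /=.
case: eqP => [->|/eqP qn]; first by rewrite !mul0r mulr0 subrr.
have [/= px wx ax] := Ql_supp qn.
have z0 := Z_gt0 l.
have -> : Ql l (x, y) / joint PX W (x, y) =
    pw (W x y) l * pw (A l y) (l^-1 - 1) / (W x y * Z l).
  rewrite /Ql /joint /=; field; rewrite !gt_eqF //.
rewrite lnD2 ?mulr_gt0 ?pw_gt0 // !lnM2 ?pw_gt0 // !ln_pw //.
by field.
Qed.

Lemma Z1 : Z 1 = 1.
Proof.
rewrite /Z invr1; transitivity (\sum_t joint PX W t); last exact: P_sum.
rewrite sum_pair; apply: eq_bigr => y _.
rewrite pw1 ?A_ge0 //; apply: eq_bigr => x _; rewrite pw1 //.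
Qed.

Lemma Ql1 : Ql 1 = joint PX W.
Proof.
apply: funext => -[x y]; rewrite /Ql /joint /= Z1 invr1 subrr mulr1 pw1 //.
case: (eqVneq (A 1 y) 0) => [A0|An]; last by rewrite pw0 // mulr1.
rewrite A0 pw0e mulr0.
have : \sum_x PX x * W x y = 0.
  by rewrite -[in RHS]A0; apply: eq_bigr => i _; rewrite pw1.
move=> /(psumr_eq0P (F := fun x => PX x * W x y)) -> //.
by move=> i _; rewrite mulr_ge0.
Qed.

Lemma weak (Q : X * Y -> R) l : is_dist Q ->
  (forall t, Q t != 0 -> joint PX W t != 0) -> 0 < l ->
  (1 - l^-1) * kl Q (prodD PX (margY Q)) - kl Q (joint PX W) <= ln (Z l).
Proof.
move=> [Q0 Q1] QP l0.
set QY := margY Q.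
have QY0 y : 0 <= QY y by apply: sumr_ge0 => x _; exact: Q0.
have QYQ x y : Q (x, y) <= QY y.
  by apply: (sum_ge_term (F := fun x => Q (x, y))) => i; exact: Q0.
have supp x y : Q (x, y) != 0 ->
    [/\ 0 < PX x, 0 < W x y, 0 < Q (x, y) & 0 < QY y].
  move=> qn; have := QP _ qn; rewrite /joint mulf_eq0 negb_or => /andP[/= px wx].
  have qx : 0 < Q (x, y) by rewrite lt0r qn Q0.
  split; [by rewrite lt0r px PX0 | by rewrite lt0r wx W0 | by [] |].
  exact: lt_le_trans qx (QYQ x y).
have QYA y : QY y != 0 -> 0 < A l y.
  move=> qy; have [x qx] : exists x, Q (x, y) != 0.
    case: (pickP (fun x => Q (x, y) != 0)) => [x qt|H]; first by exists x.
    move: qy; rewrite /QY /margY big1 ?eqxx // => i _.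
    by move: (H i) => /= /negbFE /eqP.
  have [px wx _ _] := supp x y qx.
  apply: (@lt_le_trans _ _ (PX x * pw (W x y) l)); first by rewrite mulr_gt0 ?pw_gt0.
  by apply: (sum_ge_term (F := fun x => PX x * pw (W x y) l)) => i; rewrite mulr_ge0 // pw_ge0.
set S1 := \sum_t (if Q t == 0 then 0 else Q t * ln (PX t.1 * pw (W t.1 t.2) l / Q t)).
set S2 := \sum_y QY y * ln (QY y).
set S1' := \sum_y (if QY y == 0 then 0 else QY y * ln (A l y / QY y)).
have E1 : (1 - l^-1) * kl Q (prodD PX QY) - kl Q (joint PX W) =
    l^-1 * S1 - (1 - l^-1) * S2.
  have -> : S2 = \sum_t Q t * ln (QY t.2).
    by rewrite sum_pair /S2; apply: eq_bigr => y _; rewrite /QY /margY mulr_suml.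
  rewrite /kl /S1 !mulr_sumr -!sumrB; apply: eq_bigr => -[x y] _ /=.
  case: eqP => [->|/eqP qn]; first by rewrite !(mul0r, mulr0, subrr).
  have [px wx qx qy] := supp x y qn.
  rewrite /prodD /joint /= !lnD2 ?mulr_gt0 ?pw_gt0 // !lnM2 ?pw_gt0 // ln_pw //.
  by field; rewrite gt_eqF.
have E2 : S1 <= S1'.
  rewrite /S1 /S1' sum_pair; apply: ler_sum => y _.
  case: eqP => [qy0|/eqP qyn].
    rewrite big1 // => x _.
    have -> : Q (x, y) = 0.
      exact: (@psumr_eq0P _ _ xpredT (fun x => Q (x, y)) (fun i _ => Q0 (i, y)) qy0).
    by rewrite eqxx.
  have G := @gibbs R X (fun x => Q (x, y)) (fun x => PX x * pw (W x y) l)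
    (fun x => Q0 (x, y)) (fun x => mulr_ge0 (PX0 x) (pw_ge0 _ _)).
  apply: G.
    by move=> x qx; have [px wx _ _] := supp x y qx; rewrite mulr_gt0 ?pw_gt0.
  by rewrite lt0r qyn QY0.
have E3 : l^-1 * S1' - (1 - l^-1) * S2 =
    \sum_y (if QY y == 0 then 0 else QY y * ln (pw (A l y) l^-1 / QY y)).
  rewrite /S1' /S2 !mulr_sumr -sumrB; apply: eq_bigr => y _.
  case: eqP => [->|/eqP qn]; first by rewrite !(mul0r, mulr0, subrr).
  have qy : 0 < QY y by rewrite lt0r qn QY0.
  have ay := QYA y qn.
  rewrite !lnD2 ?pw_gt0 // ln_pw //; ring.
have QYs : \sum_y QY y = 1 by rewrite -Q1 sum_pair.
have E4 : \sum_y (if QY y == 0 then 0 else QY y * ln (pw (A l y) l^-1 / QY y))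
    <= ln (Z l).
  have G := @gibbs R Y QY (fun y => pw (A l y) l^-1) QY0 (fun y => pw_ge0 _ _)
    (fun y qn => pw_gt0 _ (QYA y qn)).
  by move: G; rewrite QYs divr1 mul1r; apply; rewrite ltr01.
rewrite E1; apply: le_trans E4; rewrite -E3.
by rewrite lerD2r ler_wpM2l // invr_ge0 ltW.
Qed.

Lemma c_A y (l0 : R) : {for l0, continuous (fun l => A l y)}.
Proof.
rewrite /A; apply: cS => x; apply: cM; first exact: cC.
exact (@c_pw R (W x y) (fun t => t) l0 (@cI R l0)).
Qed.

Lemma c_pwA y (e : R -> R) (l0 : R) : {for l0, continuous e} ->
  {for l0, continuous (fun l => pw (A l y) (e l))}.
Proof.
move=> He; case: (boolP (pos y)) => py.
  have -> : (fun l => pw (A l y) (e l)) = (fun l => expR (e l * ln (A l y))).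
    by apply: funext => l; rewrite /pw gt_eqF // A_gt0.
  apply: cE; apply: cM => //; apply: cL; [exact: A_gt0 | exact: c_A].
have -> : (fun l => pw (A l y) (e l)) = (fun _ => 0).
  by apply: funext => l; rewrite A_eq0 // pw0e.
exact: cC.
Qed.

Lemma c_lnA y (l0 : R) : {for l0, continuous (fun l => ln (A l y))}.
Proof.
case: (boolP (pos y)) => py.
  apply: cL; [exact: A_gt0 | exact: c_A].
have -> : (fun l => ln (A l y)) = (fun _ => ln 0).
  by apply: funext => l; rewrite A_eq0.
exact: cC.
Qed.

Lemma c_Z (l0 : R) : l0 != 0 -> {for l0, continuous (fun l => Z l)}.
Proof.
move=> l0n; rewrite /Z; apply: cS => y; apply: c_pwA.
exact: inv_continuous.
Qed.

Lemma c_Ql t (l0 : R) : l0 != 0 -> {for l0, continuous (fun l => Ql l t)}.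
Proof.
move=> l0n; rewrite /Ql; apply: cM; last first.
  by apply: cV; [rewrite gt_eqF // Z_gt0 | exact: c_Z].
apply: cM; last by apply: c_pwA; apply: cB; [exact: inv_continuous | exact: cC].
apply: cM; first exact: cC.
exact (@c_pw R (W t.1 t.2) (fun t => t) l0 (@cI R l0)).
Qed.

Lemma c_h (l0 : R) : l0 != 0 -> {for l0, continuous (fun l => h l)}.
Proof.
move=> l0n; rewrite /h; apply: cS => t; apply: cM; first exact: c_Ql.
apply: cB; last exact: c_lnA.
by apply: cM; [exact: cI | exact: cC].
Qed.

Lemma dual_eq b Rt l : 1 < b -> 1 <= l ->
  dual_fun b PX W Rt l = ((1 - l^-1) * Rt - ln (Z l) / ln b)%:E.
Proof.
move=> b1 l1; have lb : 0 < ln b := ln_gt0 b1.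
have l0 : l != 0 by rewrite gt_eqF // (lt_le_trans ltr01 l1).
rewrite /dual_fun /sibsonMI; case: eqP => [->|/eqP ln1].
  by rewrite subrr mul0r mul0e invr1 subrr !mul0r Z1 ln1 !mul0r subrr.
have -> : \sum_y (\sum_x PX x * W x y `^ l) `^ l^-1 = Z l.
  apply: eq_bigr => y _; rewrite pwE ?invr_eq0 //; congr pw.
  by apply: eq_bigr => x _; rewrite pwE.
have l10 : l - 1 != 0 by rewrite subr_eq0.
rewrite -EFinB -EFinM; congr EFin; rewrite /logb; field.
by rewrite l0 l10 gt_eqF.
Qed.

Lemma obj_fin b Rt Q : 1 < b -> is_dist Q ->
  (forall t, Q t != 0 -> joint PX W t != 0) ->
  objective b PX W Rt Q = (kl Q (joint PX W) / ln b +
    2^-1 * Num.max 0 (Rt - kl Q (prodD PX (margY Q)) / ln b))%:E.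
Proof.
move=> b1 [Q0 Q1] QP; rewrite /objective (relent_kl b QP) (relent_kl b).
  by rewrite -EFinB -EFin_max -EFinM -EFinD.
move=> [x y] qn; rewrite /prodD /=; have := QP _ qn.
rewrite /joint mulf_eq0 negb_or => /andP[/= px _]; rewrite mulf_neq0 //.
have qx : 0 < Q (x, y) by rewrite lt0r qn Q0.
rewrite gt_eqF //; apply: (lt_le_trans qx).
by apply: (sum_ge_term (F := fun x => Q (x, y))) => i; exact: Q0.
Qed.

Lemma obj_oo b Rt Q : ~ (forall t, Q t != 0 -> joint PX W t != 0) ->
  objective b PX W Rt Q = +oo%E.
Proof.
move=> H.
case: (pickP (fun t => (Q t != 0) && (joint PX W t == 0))) => [t /andP[qt /eqP pt]| H'];
  last first.
  exfalso; apply: H => t qt; move: (H' t) => /=; rewrite qt /= => /negbT //.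
rewrite /objective (relent_oo b qt pt) addye //.
set m := (_ * _)%E.
have m0 : (0 <= m)%E.
  apply: mule_ge0; first by rewrite lee_fin invr_ge0.
  by rewrite le_max lexx.
by apply/negP => /eqP e; move: m0; rewrite e.
Qed.

Lemma weak_e b Rt Q l : 1 < b -> is_dist Q -> 1 <= l <= 2 ->
  (dual_fun b PX W Rt l <= objective b PX W Rt Q)%E.
Proof.
move=> b1 QD /andP[l1 l2]; have lb : 0 < ln b := ln_gt0 b1.
have l0 : 0 < l by apply: lt_le_trans l1.
case: (boolP [forall t, (Q t != 0) ==> (joint PX W t != 0)]) => [/forallP H|Hn];
  last first.
  rewrite obj_oo ?leey // => H; move/negP: Hn; apply; apply/forallP => t.
  by apply/implyP; exact: H.
have QP t : Q t != 0 -> joint PX W t != 0 by exact: (implyP (H t)).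
rewrite obj_fin // dual_eq // lee_fin.
have Wk := weak QD QP l0.
set k1 := kl Q (joint PX W) in Wk *.
set k2 := kl Q (prodD PX (margY Q)) in Wk *.
set u := l^-1 in Wk *.
have ul : u * l = 1 by rewrite mulVf // gt_eqF.
have u0 : 0 < u by rewrite invr_gt0.
have u1 : u <= 1 by nra.
have u2 : 2^-1 <= u by nra.
set c := (ln b)^-1.
have c0 : 0 <= c by rewrite invr_ge0 ltW.
have Hc : ((1 - u) * k2 - k1) * c <= ln (Z l) * c by rewrite ler_wpM2r.
set d := Rt - k2 * c.
have Hm : (1 - u) * d <= 2^-1 * Num.max 0 d.
  set m := Num.max 0 d.
  have m0 : 0 <= m by rewrite /m le_max lexx.
  have md : d <= m by rewrite /m le_max lexx orbT.
  nra.
rewrite /d in Hm; nra.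
Qed.

Lemma supp_P l t : Ql l t != 0 -> joint PX W t != 0.
Proof.
move=> H; have [px wx _] := Ql_supp H; rewrite /joint mulf_neq0 // gt_eqF //.
Qed.

Lemma supp_Y l t : Ql l t != 0 -> prodD PX (margY (Ql l)) t != 0.
Proof.
move=> H; have [px wx ax] := Ql_supp H; rewrite /prodD margQl /=.
by rewrite mulf_neq0 // gt_eqF // divr_gt0 // ?pw_gt0 // Z_gt0.
Qed.

Lemma strong b Rt : 1 < b -> (MI b PX W < Rt%:E)%E ->
  exists l, 1 <= l <= 2 /\ objective b PX W Rt (Ql l) = dual_fun b PX W Rt l.
Proof.
move=> b1; have lb : 0 < ln b := ln_gt0 b1.
have MIe : MI b PX W = (h 1 / ln b)%:E.
  by rewrite /MI -Ql1 (relent_kl b (@supp_Y 1)) kl2_Ql.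
rewrite MIe lte_fin => hlt.
have Hobj l : 1 <= l -> objective b PX W Rt (Ql l) =
    (((1 - l^-1) * h l - ln (Z l)) / ln b
     + 2^-1 * Num.max 0 (Rt - h l / ln b))%:E.
  move=> l1; rewrite (@obj_fin b Rt (Ql l) b1 (Ql_dist l) (@supp_P l)).
  by rewrite kl1_Ql ?kl2_Ql // gt_eqF // (lt_le_trans ltr01 l1).
case: (leP (h 2 / ln b) Rt) => h2.
  exists 2; split; first by rewrite ler1n lexx.
  rewrite Hobj ?ler1n // dual_eq ?ler1n //; congr EFin.
  rewrite (max_idPr _); last by rewrite subr_ge0.
  by field; rewrite gt_eqF.
have h12 : h 1 < Rt * ln b by rewrite -ltr_pdivrMr.
have h22 : Rt * ln b < h 2 by rewrite -ltr_pdivlMr.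
have [l lI hl] : exists2 l, l \in `[1, 2] & h l = Rt * ln b.
  apply: IVT; first by rewrite ler1n.
    apply: continuous_subspace_itv => l; rewrite in_itv /= => /andP[l1 _].
    by apply: c_h; rewrite gt_eqF // (lt_le_trans ltr01 l1).
  have h1le : h 1 <= h 2 by apply: ltW; exact: lt_trans h12 h22.
  rewrite (min_idPl h1le) (max_idPr h1le).
  by rewrite !ltW.
move: lI; rewrite in_itv /= => lI; exists l; split => //.
have l1 : 1 <= l by case/andP: lI.
rewrite Hobj // dual_eq //; congr EFin.
rewrite hl mulfK ?gt_eqF // subrr maxxx.
by field; rewrite !gt_eqF // (lt_le_trans ltr01 l1).
Qed.

End Chan.

Theorem proposition1 (R : realType) (b : R) (X Y : finType)
    (PX : X -> R) (W : X -> Y -> R) (Rt : R) :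
  1 < b ->
  is_dist PX ->
  (forall x, is_dist (W x)) ->
  (MI b PX W < Rt%:E)%E ->
  exists v : \bar R,
    [/\ (exists Q : X * Y -> R, is_dist Q /\ objective b PX W Rt Q = v),
        (forall Q : X * Y -> R, is_dist Q -> (v <= objective b PX W Rt Q)%E),
        (exists l : R, 1 <= l <= 2 /\ dual_fun b PX W Rt l = v) &
        (forall l : R, 1 <= l <= 2 -> (dual_fun b PX W Rt l <= v)%E)].
Proof.
move=> b1 [PX0 PX1] HW HMI.
have W0 x y : 0 <= W x y by exact: (HW x).1.
have W1 x : \sum_y W x y = 1 by exact: (HW x).2.
have [l [lI Heq]] := strong PX0 PX1 W0 W1 b1 HMI.
exists (dual_fun b PX W Rt l); split.
- by exists (Ql PX W l); split; [exact: Ql_dist | exact: Heq].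
- by move=> Q QD; exact: weak_e.
- by exists l.
- move=> l' l'I; rewrite -Heq; apply: weak_e => //; exact: Ql_dist.
Qed.
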